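(* Let $n\ge1$ and $0<\varphi<t<1$ with $nt$ an integer, and let $\mathrm{lE}_n(t|\varphi)=\min\left((t-\varphi)\sqrt{\frac{\pi n}{8\varphi(1-\varphi)}},1\right)$. Then $$-\log P_{\mathrm{X},n}(t|\varphi)\in-\log P_{\mathrm{CH},n}(t|\varphi)+\tfrac12\log n-\log\left(\frac{1-\varphi}{t-\varphi}\sqrt{\frac{t}{2\pi(1-t)}}\right)+\left[-\frac{\mathrm{lE}_n(t|\varphi)}{n(t-\varphi)},\ \frac{\varphi(1-\varphi)}{(t-\varphi)^2n}+\frac{1}{12nt(1-t)}\right].$$
   Context: Logarithms are natural. For an integer $n\ge1$, $0<\varphi<1$ and $t\in[0,1]$ with $nt$ an integer: $P_{\mathrm{X},n}(t|\varphi)=\sum_{k\ge nt}\binom{n}{k}\varphi^k(1-\varphi)^{n-k}$; $P_{\mathrm{CH},n}(t|\varphi)=\left(\frac{\varphi}{t}\right)^{nt}\left(\frac{1-\varphi}{1-t}\right)^{n(1-t)}$ if $t\ge\varphi$, and $=1$ otherwise. Interval notation: $x\in y+[u,v]$ means $y+u\le x\le y+v$. *)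

(* Defs.v *)
From Stdlib Require Import Reals Lra.
Open Scope R_scope.

(* P_{X,n}(t|phi) = sum_{k >= n t} C(n,k) phi^k (1-phi)^(n-k), where n t = m is an
   integer (natural number) given explicitly; the sum runs over k = m..n
   (terms with k > n vanish). *)
Definition P_X (n m : nat) (phi : R) : R :=
  sum_f_R0 (fun j => if (m <=? j)%nat
                     then C n j * phi ^ j * (1 - phi) ^ (n - j)
                     else 0) n.

Definition P_CH (n : nat) (t phi : R) : R :=
  if Rle_dec phi t then
    Rpower (phi / t) (INR n * t) * Rpower ((1 - phi) / (1 - t)) (INR n * (1 - t))
  else 1.

Definition lE (n : nat) (t phi : R) : R :=
  Rmin ((t - phi) * sqrt (PI * INR n / (8 * phi * (1 - phi)))) 1.

(* Main.v *)
Require Import Defs.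
From Stdlib Require Import Reals Lra Lia.
From Stdlib Require Import Factorial.
From Coquelicot Require Import Coquelicot.
Open Scope R_scope.


Lemma incr_on (f df : R -> R) a b : a <= b ->
  (forall x, a <= x <= b -> is_derive f x (df x)) ->
  (forall x, a <= x <= b -> 0 <= df x) -> f a <= f b.
Proof.
  intros Hab Hd Hp.
  destruct (MVT_gen f a b df) as [c [Hc Heq]].
  - intros x Hx. apply Hd. rewrite Rmin_left in Hx by lra. rewrite Rmax_right in Hx by lra. lra.
  - intros x Hx. apply continuity_pt_filterlim. apply (ex_derive_continuous (K:=R_AbsRing) (V:=R_NormedModule)).
    eexists. apply Hd. rewrite Rmin_left in Hx by lra. rewrite Rmax_right in Hx by lra. lra.
  - rewrite Rmin_left in Hc by lra. rewrite Rmax_right in Hc by lra.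
    assert (0 <= df c * (b - a)) by (apply Rmult_le_pos; [apply Hp; lra | lra]). lra.
Qed.

Lemma L1 x : 0 <= x < 1 -> 2 * x <= ln (1 + x) - ln (1 - x).
Proof.
  intros Hx.
  assert (H := incr_on (fun y => ln (1 + y) - ln (1 - y) - 2 * y)
    (fun y => 2 * y^2 / (1 - y^2)) 0 x ltac:(lra)).
  simpl in H. replace (1+0) with 1 in H by ring. replace (1-0) with 1 in H by ring.
  rewrite ln_1 in H. enough (0 - 0 - 2*0 <= ln (1 + x) - ln (1 - x) - 2 * x) by lra.
  apply H.
  - intros y Hy. auto_derive. lra. field. split; nra.
  - intros y Hy. apply Rmult_le_pos. nra. apply Rlt_le, Rinv_0_lt_compat. nra.
Qed.

Lemma L2 x : 0 <= x < 1 -> ln (1 + x) - ln (1 - x) <= 2 * x + 2/3 * x^3 / (1 - x^2).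
Proof.
  intros Hx.
  assert (H := incr_on (fun y => 2 * y + 2/3 * y^3 / (1 - y^2) - (ln (1 + y) - ln (1 - y)))
    (fun y => 4/3 * y^4 / (1 - y^2)^2) 0 x ltac:(lra)).
  cbv beta in H.
  replace (2 * 0 + 2 / 3 * 0 ^ 3 / (1 - 0 ^ 2) - (ln (1 + 0) - ln (1 - 0))) with 0 in H
   by (replace (1+0) with 1 by ring; replace (1-0) with 1 by ring; rewrite ln_1; field).
  enough (0 <= 2 * x + 2/3 * x^3 / (1 - x^2) - (ln (1 + x) - ln (1 - x))) by lra.
  apply H.
  - intros y Hy. auto_derive. repeat split; nra. field. split; nra.
  - intros y Hy. apply Rmult_le_pos. nra. apply Rlt_le, Rinv_0_lt_compat. apply pow_lt. nra.
Qed.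

Lemma L3 w : 0 <= w -> w - w^2/2 <= ln (1 + w).
Proof.
  intros Hw.
  assert (H := incr_on (fun y => ln (1 + y) - (y - y^2/2))
    (fun y => y^2 / (1 + y)) 0 w Hw).
  simpl in H. replace (1+0) with 1 in H by ring. rewrite ln_1 in H.
  enough (0 - (0 - 0*(0*1)/2) <= ln (1 + w) - (w - w*(w*1)/2)) by (simpl; lra).
  apply H.
  - intros y Hy. auto_derive. lra. field. lra.
  - intros y Hy. apply Rmult_le_pos. nra. apply Rlt_le, Rinv_0_lt_compat. lra.
Qed.

Lemma L4 v : 0 <= v -> exp (- v) <= 1 - v + v^2/2.
Proof.
  intros Hv.
  assert (H := incr_on (fun y => 1 - y + y^2/2 - exp (- y))
    (fun y => exp (-y) - (1 - y)) 0 v Hv).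
  simpl in H. rewrite Ropp_0, exp_0 in H.
  enough (1 - 0 + 0*(0*1)/2 - 1 <= 1 - v + v*(v*1)/2 - exp (-v)) by (simpl; lra).
  apply H.
  - intros y Hy. auto_derive. auto. field.
  - intros y Hy. pose proof (exp_ineq1_le (-y)). lra.
Qed.

Lemma L5 v : exp (- v) >= 1 - v.
Proof. pose proof (exp_ineq1_le (-v)). lra. Qed.


Definition Wi (n : nat) : R := RInt (fun x => sin x ^ n) 0 (PI / 2).

Lemma Wi_ex n : ex_RInt (fun x => sin x ^ n) 0 (PI / 2).
Proof.
  apply (ex_RInt_continuous (V:=R_CompleteNormedModule)). intros z _.
  apply (ex_derive_continuous (K:=R_AbsRing) (V:=R_NormedModule)). auto_derive. auto.
Qed.

Lemma Wi_rec n : INR (S n) * Wi n = INR (S (S n)) * Wi (S (S n)).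
Proof.
  assert (Hd : is_RInt (fun x => INR (S n) * sin x ^ n - INR (S (S n)) * sin x ^ (S (S n))) 0 (PI/2)
     (minus ((fun y => cos y * sin y ^ (S n)) (PI/2)) ((fun y => cos y * sin y ^ (S n)) 0))).
  { apply (is_RInt_derive (V:=R_CompleteNormedModule) (fun y => cos y * sin y ^ (S n))).
    - intros x _. auto_derive. auto.
      change (match n with | 0%nat => 1 | S _ => INR n + 1 end) with (INR (S n)).
      rewrite !S_INR. pose proof (sin2_cos2 x). unfold Rsqr in H. simpl. replace (cos x * (1 * cos x * ((INR n + 1) * sin x ^ n))) with ((cos x * cos x) * ((INR n + 1) * sin x ^ n)) by ring. replace (cos x * cos x) with (1 - sin x * sin x) by lra. ring.
    - intros x _. apply (ex_derive_continuous (K:=R_AbsRing) (V:=R_NormedModule)). auto_derive. auto. }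
  cbv beta in Hd. rewrite cos_PI2, sin_0 in Hd.
  replace (minus (0 * sin (PI / 2) ^ S n) (cos 0 * 0 ^ S n)) with 0 in Hd
    by (unfold minus, plus, opp; simpl; ring).
  assert (H2 : is_RInt (fun x => INR (S n) * sin x ^ n - INR (S (S n)) * sin x ^ (S (S n))) 0 (PI/2)
     (INR (S n) * Wi n - INR (S (S n)) * Wi (S (S n)))).
  { apply (is_RInt_minus (V:=R_NormedModule)); apply (is_RInt_scal (V:=R_NormedModule));
    apply (RInt_correct (V:=R_CompleteNormedModule)); apply Wi_ex. }
  pose proof (is_RInt_unique _ _ _ _ Hd) as E1.
  pose proof (is_RInt_unique _ _ _ _ H2) as E2. rewrite E1 in E2. lra.
Qed.

Lemma Wi_0 : Wi 0 = PI / 2.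
Proof. unfold Wi. simpl. rewrite RInt_const. compute -[PI]. ring. Qed.

Lemma Wi_1 : Wi 1 = 1.
Proof.
  unfold Wi. apply is_RInt_unique.
  assert (Hd : is_RInt (fun y => sin y ^ 1) 0 (PI/2) (minus ((fun y => - cos y) (PI/2)) ((fun y => - cos y) 0))).
  { apply (is_RInt_derive (V:=R_CompleteNormedModule) (fun y => - cos y)).
    - intros x _. auto_derive. auto. ring.
    - intros x _. apply (ex_derive_continuous (K:=R_AbsRing) (V:=R_NormedModule)). auto_derive. auto. }
  cbv beta in Hd. rewrite cos_PI2, cos_0 in Hd.
  replace (minus (Ropp 0) (Ropp 1)) with 1 in Hd by (unfold minus, plus, opp; simpl; ring). exact Hd.
Qed.

Lemma Wi_decr n : Wi (S n) <= Wi n.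
Proof.
  unfold Wi. apply RInt_le. pose proof PI_RGT_0. lra. apply Wi_ex. apply Wi_ex.
  intros x Hx. pose proof PI_RGT_0.
  assert (0 <= sin x) by (apply sin_ge_0; lra).
  pose proof (SIN_bound x). simpl.
  assert (0 <= sin x ^ n) by (apply pow_le; lra). nra.
Qed.

Definition Aw (k : nat) : R := 4 ^ k * INR (fact k) ^ 2 / INR (fact (2 * k)).

Lemma fact_pos' k : 0 < INR (fact k).
Proof. apply lt_0_INR, lt_O_fact. Qed.

Lemma Aw_pos k : 0 < Aw k.
Proof. unfold Aw. pose proof (fact_pos' k). pose proof (fact_pos' (2*k)).
  apply Rdiv_lt_0_compat; [apply Rmult_lt_0_compat; [apply pow_lt; lra| apply pow_lt; lra]|lra]. Qed.

Lemma Aw_S k : Aw (S k) = Aw k * (2 * INR (S k) / (2 * INR k + 1)).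
Proof.
  unfold Aw. replace (2 * S k)%nat with (S (S (2 * k))) by lia.
  rewrite !fact_simpl, !mult_INR. rewrite !S_INR, mult_INR. simpl (INR 2).
  pose proof (fact_pos' k). pose proof (fact_pos' (2*k)). pose proof (pos_INR k).
  simpl pow. field. repeat split; lra.
Qed.

Lemma INR2 : INR 2 = 2.
Proof. simpl. ring. Qed.

Lemma Wi_even k : Wi (2 * k) * Aw k = PI / 2.
Proof.
  induction k.
  - simpl. rewrite Wi_0. unfold Aw. simpl. field.
  - pose proof (Wi_rec (2 * k)) as R.
    rewrite Aw_S. rewrite !S_INR, mult_INR, INR2 in R. rewrite S_INR.
    assert (E : (2 * S k = S (S (2 * k)))%nat) by lia. rewrite E.
    pose proof (pos_INR k).
    replace (Wi (S (S (2 * k))) * (Aw k * (2 * (INR k + 1) / (2 * INR k + 1))))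
      with ((2 * INR k + 1 + 1) * Wi (S (S (2 * k))) * Aw k / (2 * INR k + 1)) by (field; lra).
    rewrite <- R. rewrite <- IHk. field. lra.
Qed.

Lemma Wi_odd k : Wi (2 * k + 1) * (2 * INR k + 1) = Aw k.
Proof.
  induction k.
  - simpl. rewrite Wi_1. unfold Aw. simpl. field.
  - pose proof (Wi_rec (2 * k + 1)) as R.
    rewrite Aw_S. rewrite !S_INR, plus_INR, mult_INR, INR2 in R. rewrite S_INR.
    assert (E : (2 * S k + 1 = S (S (2 * k + 1)))%nat) by lia. rewrite E.
    pose proof (pos_INR k).
    replace (Wi (S (S (2 * k + 1))) * (2 * (INR k + 1) + 1))
      with ((2 * INR k + INR 1 + 1 + 1) * Wi (S (S (2 * k + 1)))) by (simpl; ring).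
    rewrite <- R. rewrite <- IHk. simpl. field. lra.
Qed.

Lemma wallis k : (1 <= k)%nat -> PI * INR k <= Aw k ^ 2 <= PI * (INR k + / 2).
Proof.
  intros Hk. pose proof (Aw_pos k). pose proof PI_RGT_0.
  assert (HK : 1 <= INR k) by (apply (le_INR 1); lia).
  split.
  - destruct k as [|j]; [lia|].
    pose proof (Wi_decr (2 * j + 1)) as D.
    replace (S (2 * j + 1)) with (2 * S j)%nat in D by lia.
    pose proof (Wi_even (S j)) as E. pose proof (Wi_odd j) as O.
    rewrite Aw_S in E. pose proof (Aw_pos j). rewrite S_INR in *. pose proof (pos_INR j).
    assert (E2 : Wi (2 * S j) = PI / 2 / (Aw j * (2 * (INR j + 1) / (2 * INR j + 1)))) by (rewrite <- E; field; split; lra).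
    assert (O2 : Wi (2 * j + 1) = Aw j / (2 * INR j + 1)) by (rewrite <- O; field; lra).
    rewrite Aw_S, S_INR. rewrite E2, O2 in D.
    set (a := Aw j) in *. set (J := INR j) in *.
    apply Rmult_le_compat_r with (r := a * (2 * (J+1)/(2*J+1)) * (2 * (J+1))) in D.
    2:{ apply Rlt_le. apply Rmult_lt_0_compat; [apply Rmult_lt_0_compat|]; try lra. apply Rdiv_lt_0_compat; lra. }
    replace (PI / 2 / (a * (2 * (J + 1) / (2 * J + 1))) * (a * (2 * (J + 1) / (2 * J + 1)) * (2 * (J + 1))))
      with (PI * (J+1)) in D by (field; split; lra).
    replace (a / (2 * J + 1) * (a * (2 * (J + 1) / (2 * J + 1)) * (2 * (J + 1))))
      with ((a * (2 * (J + 1) / (2 * J + 1))) ^ 2) in D by (field; lra). lra.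
  - pose proof (Wi_decr (2 * k)) as D. replace (S (2 * k)) with (2 * k + 1)%nat in D by lia.
    pose proof (Wi_even k) as E. pose proof (Wi_odd k) as O.
    assert (E2 : Wi (2 * k) = PI / 2 / Aw k) by (rewrite <- E; field; lra).
    assert (O2 : Wi (2 * k + 1) = Aw k / (2 * INR k + 1)) by (rewrite <- O; field; lra).
    rewrite E2, O2 in D. set (a := Aw k) in *. set (K := INR k) in *.
    apply Rmult_le_compat_r with (r := a * (2 * K + 1)) in D; [|nra].
    replace (a / (2 * K + 1) * (a * (2 * K + 1))) with (a ^ 2) in D by (field; lra).
    replace (PI / 2 / a * (a * (2 * K + 1))) with (PI * (K + /2)) in D by (field; lra). lra.
Qed.


Definition dd (k : nat) : R := ln (INR (fact k)) - (INR k + /2) * ln (INR k) + INR k.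

Lemma INR_fact_pos k : 0 < INR (fact k).
Proof. apply lt_0_INR, lt_O_fact. Qed.

Lemma dd_step k : (1 <= k)%nat ->
  0 <= dd k - dd (S k) <= 1 / (12 * INR k) - 1 / (12 * INR (S k)).
Proof.
  intros Hk. unfold dd.
  assert (HK : 1 <= INR k) by (apply (le_INR 1); lia).
  rewrite fact_simpl, mult_INR, ln_mult by (try apply INR_fact_pos; apply lt_0_INR; lia).
  rewrite !S_INR.
  set (K := INR k) in *.
  set (x := 1 / (2 * K + 1)).
  assert (Hx : 0 <= x < 1) by (unfold x; split; [apply Rlt_le, Rdiv_lt_0_compat; lra|
     apply (Rmult_lt_reg_r (2*K+1)); [lra| unfold Rdiv; rewrite Rmult_assoc, Rinv_l; lra]]).
  assert (Hln : ln (1 + x) - ln (1 - x) = ln (K + 1) - ln K).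
  { replace (1 + x) with (2 * (K + 1) / (2 * K + 1)) by (unfold x; field; lra).
    replace (1 - x) with (2 * K / (2 * K + 1)) by (unfold x; field; lra).
    rewrite !ln_div, !ln_mult by lra. ring. }
  pose proof (L1 x Hx) as H1. pose proof (L2 x Hx) as H2. rewrite Hln in H1, H2.
  replace (ln (INR (fact k)) - (K + / 2) * ln K + K -
    (ln (K + 1) + ln (INR (fact k)) - (K + 1 + / 2) * ln (K + 1) + (K + 1)))
    with ((K + /2) * (ln (K + 1) - ln K) - 1) by ring.
  assert (HKx : K + /2 = 1 / (2 * x)) by (unfold x; field; lra).
  split.
  - rewrite HKx. apply Rmult_le_reg_l with (2 * x). unfold x. apply Rmult_lt_0_compat. lra. apply Rdiv_lt_0_compat; lra.
    rewrite Rmult_minus_distr_l. rewrite <- Rmult_assoc.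
    replace (2 * x * (1 / (2 * x))) with 1 by (field; unfold x; apply Rgt_not_eq, Rdiv_lt_0_compat; lra). lra.
  - assert (Hm : (K + /2) * (ln (K + 1) - ln K) <= (K + /2) * (2 * x + 2 / 3 * x ^ 3 / (1 - x ^ 2)))
      by (apply Rmult_le_compat_l; lra).
    assert (He : (K + /2) * (2 * x + 2 / 3 * x ^ 3 / (1 - x ^ 2)) - 1 = 1 / (12 * K) - 1 / (12 * (K + 1))).
    { unfold x. field. repeat split; nra. }
    lra.
Qed.


Definition cst : R := / 2 * ln (2 * PI).

Lemma dd_mono k j : (1 <= k)%nat -> (k <= j)%nat -> dd j <= dd k.
Proof.
  intros Hk Hkj. induction Hkj. lra.
  pose proof (dd_step m ltac:(lia)). lra.
Qed.

Lemma ee_mono k j : (1 <= k)%nat -> (k <= j)%nat ->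
  dd k - 1 / (12 * INR k) <= dd j - 1 / (12 * INR j).
Proof.
  intros Hk Hkj. induction Hkj. lra.
  pose proof (dd_step m ltac:(lia)). lra.
Qed.

Lemma ln_le x y : 0 < x -> x <= y -> ln x <= ln y.
Proof. intros. destruct H0. apply Rlt_le, ln_increasing; auto. subst; lra. Qed.

Lemma ln_1p u : 0 < 1 + u -> ln (1 + u) <= u.
Proof. intros. rewrite <- (ln_exp u) at 2. apply ln_le; auto. apply exp_ineq1_le. Qed.

Lemma dd_double k : (1 <= k)%nat -> 2 * dd k - dd (2 * k) = ln (Aw k) - / 2 * ln (INR k) + / 2 * ln 2.
Proof.
  intros Hk. assert (HK : 1 <= INR k) by (apply (le_INR 1); lia).
  unfold dd, Aw. pose proof (fact_pos' k). pose proof (fact_pos' (2*k)).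
  rewrite ln_div, ln_mult, !ln_pow; try lra.
  2,3,4: try apply pow_lt; try apply Rmult_lt_0_compat; try apply pow_lt; lra.
  rewrite mult_INR, INR2, ln_mult by lra.
  replace 4 with (2*2) by ring. rewrite ln_mult by lra. ring.
Qed.

Lemma dd_double_bounds k : (1 <= k)%nat ->
  cst <= 2 * dd k - dd (2 * k) <= cst + / (4 * INR k).
Proof.
  intros Hk. assert (HK : 1 <= INR k) by (apply (le_INR 1); lia).
  pose proof (wallis k Hk) as [W1 W2]. pose proof (Aw_pos k). pose proof PI_RGT_0.
  rewrite dd_double by auto. unfold cst.
  assert (Hl : 2 * ln (Aw k) = ln (Aw k ^ 2)) by (rewrite ln_pow; [simpl; ring|lra]).
  split.
  - assert (ln (PI * INR k) <= ln (Aw k ^ 2)) by (apply ln_le; nra).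
    rewrite ln_mult in H1 by lra. rewrite ln_mult by lra. lra.
  - assert (ln (Aw k ^ 2) <= ln (PI * (INR k + /2))) by (apply ln_le; nra).
    rewrite ln_mult in H1 by lra. rewrite ln_mult by lra.
    assert (E : INR k + / 2 = INR k * (1 + / (2 * INR k))) by (field; lra).
    rewrite E, ln_mult in H1 by (try lra; assert (0 < / (2 * INR k)) by (apply Rinv_0_lt_compat; lra); lra).
    assert (ln (1 + / (2 * INR k)) <= / (2 * INR k)) by (apply ln_1p; assert (0 < / (2 * INR k)) by (apply Rinv_0_lt_compat; lra); lra).
    assert (/ (2 * INR k) = 2 * / (4 * INR k)) by (field; lra). lra.
Qed.

Lemma small_j k eps : 0 < eps -> exists j, (k <= j)%nat /\ (1 <= j)%nat /\ / INR j < eps.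
Proof.
  intros He. destruct (archimed_cor1 eps He) as [N [HN HN0]].
  exists (Nat.max N k + 1)%nat. split. lia. split. lia.
  apply Rle_lt_trans with (/ INR N); auto.
  apply Rinv_le_contravar. apply lt_0_INR; lia. apply le_INR. lia.
Qed.

Lemma dd_lower k : (1 <= k)%nat -> cst <= dd k.
Proof.
  intros Hk. destruct (Rle_lt_dec cst (dd k)) as [|Hlt]; auto. exfalso.
  destruct (small_j k (cst - dd k) ltac:(lra)) as [j [Hkj [Hj Hinv]]].
  assert (HJ : 1 <= INR j) by (apply (le_INR 1); lia).
  pose proof (dd_mono k j Hk Hkj).
  pose proof (dd_double_bounds j Hj) as [B1 _].
  pose proof (ee_mono j (2 * j) Hj ltac:(lia)) as E. rewrite mult_INR, INR2 in E.
  assert (1 / (12 * INR j) - 1 / (12 * (2 * INR j)) <= / INR j).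
  { replace (1 / (12 * INR j) - 1 / (12 * (2 * INR j))) with (/ INR j * / 24) by (field; lra).
    assert (0 < / INR j) by (apply Rinv_0_lt_compat; lra). nra. }
  lra.
Qed.

Lemma dd_upper k : (1 <= k)%nat -> dd k <= cst + 1 / (12 * INR k).
Proof.
  intros Hk. destruct (Rle_lt_dec (dd k) (cst + 1 / (12 * INR k))) as [|Hlt]; auto. exfalso.
  destruct (small_j k (dd k - 1 / (12 * INR k) - cst) ltac:(lra)) as [j [Hkj [Hj Hinv]]].
  assert (HJ : 1 <= INR j) by (apply (le_INR 1); lia).
  pose proof (ee_mono k j Hk Hkj).
  pose proof (dd_double_bounds j Hj) as [_ B2].
  pose proof (dd_mono j (2 * j) Hj ltac:(lia)).
  assert (0 < 1 / (12 * INR j)) by (apply Rdiv_lt_0_compat; lra).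
  assert (/ (4 * INR j) <= / INR j).
  { apply Rinv_le_contravar; lra. }
  lra.
Qed.


Definition bt (n j : nat) (u : R) : R := Binomial.C n j * u ^ j * (1 - u) ^ (n - j).
Definition Gu (n m N : nat) (u : R) : R :=
  sum_f_R0 (fun j => if (m <=? j)%nat then bt n j u else 0) N.

Lemma C_pos n j : 0 < Binomial.C n j.
Proof.
  unfold Binomial.C. apply Rdiv_lt_0_compat. apply lt_0_INR, lt_O_fact.
  rewrite <- mult_INR. apply lt_0_INR. apply Nat.mul_pos_pos; apply lt_O_fact.
Qed.

Lemma bt_nonneg n j u : 0 <= u <= 1 -> 0 <= bt n j u.
Proof.
  intros Hu. unfold bt. pose proof (C_pos n j).
  apply Rmult_le_pos; [apply Rmult_le_pos|]; try apply pow_le; lra.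
Qed.

Lemma Gu_nonneg n m N u : 0 <= u <= 1 -> 0 <= Gu n m N u.
Proof.
  intros Hu. unfold Gu. induction N; simpl.
  - destruct (m <=? 0)%nat; [apply bt_nonneg; auto| lra].
  - destruct (m <=? S N)%nat; [pose proof (bt_nonneg n (S N) u Hu)|]; lra.
Qed.

Lemma Gu_zero n m N u : (N < m)%nat -> Gu n m N u = 0.
Proof.
  intros H. unfold Gu. induction N; simpl.
  - destruct (Nat.leb_spec m 0); [lia|lra].
  - destruct (Nat.leb_spec m (S N)); [lia|]. rewrite IHN by lia. lra.
Qed.

Lemma Gu_S n m N u : Gu n m (S N) u = Gu n m N u + (if (m <=? S N)%nat then bt n (S N) u else 0).
Proof. reflexivity. Qed.

Lemma bt_S n j u : (j < n)%nat -> u <> 1 ->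
  bt n (S j) u = bt n j u * (INR (n - j) / INR (S j)) * (u / (1 - u)).
Proof.
  intros Hj Hu. unfold bt. rewrite pascal_step3 by auto.
  replace (n - j)%nat with (S (n - S j)) at 2 by lia. change ((1-u)^(S (n - S j))) with ((1-u) * (1-u)^(n - S j)). change (u ^ S j) with (u * u ^ j).
  field. split. lra. apply not_0_INR; lia.
Qed.

Lemma bt_ratio n m j phi : (1 <= m)%nat -> (m <= j)%nat -> (j < n)%nat -> 0 < phi < 1 ->
  bt n (S j) phi <= (INR (n - m) * phi / (INR m * (1 - phi))) * bt n j phi.
Proof.
  intros Hm Hmj Hjn Hp. rewrite bt_S by (auto; lra).
  pose proof (bt_nonneg n j phi ltac:(lra)).
  assert (HM : 1 <= INR m) by (apply (le_INR 1); lia).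
  assert (E1 : INR (n - j) <= INR (n - m)) by (apply le_INR; lia).
  assert (E2 : INR m <= INR (S j)) by (apply le_INR; lia).
  assert (E0 : 0 <= INR (n - j)) by apply pos_INR.
  replace (bt n j phi * (INR (n - j) / INR (S j)) * (phi / (1 - phi)))
    with ((INR (n - j) / INR (S j)) * (phi / (1 - phi)) * bt n j phi) by ring.
  replace (INR (n - m) * phi / (INR m * (1 - phi))) with ((INR (n - m) / INR m) * (phi / (1 - phi)))
    by (field; lra).
  apply Rmult_le_compat_r; auto. apply Rmult_le_compat_r. apply Rlt_le, Rdiv_lt_0_compat; lra.
  apply Rle_trans with (INR (n - m) / INR (S j)).
  - apply Rmult_le_compat_r; auto. apply Rlt_le, Rinv_0_lt_compat; lra.
  - apply Rmult_le_compat_l. apply pos_INR. apply Rinv_le_contravar; lra.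
Qed.

Lemma Gu_upper n m phi (rho : R) : (1 <= m)%nat -> (m <= n)%nat -> 0 < phi < 1 ->
  rho = INR (n - m) * phi / (INR m * (1 - phi)) -> rho < 1 ->
  Gu n m n phi <= bt n m phi / (1 - rho).
Proof.
  intros Hm Hmn Hp Hr Hr1.
  assert (Hr0 : 0 <= rho).
  { rewrite Hr. apply Rmult_le_pos. apply Rmult_le_pos. apply pos_INR. lra.
    apply Rlt_le, Rinv_0_lt_compat. apply Rmult_lt_0_compat. apply lt_0_INR; lia. lra. }
  assert (Hgen : forall N, (m <= N <= n)%nat -> Gu n m N phi <= (bt n m phi - rho * bt n N phi) / (1 - rho)).
  { induction N; intros HN. lia.
    rewrite Gu_S. destruct (Nat.leb_spec m (S N)); [|lia].
    destruct (Nat.eq_dec m (S N)) as [E|E].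
    - rewrite Gu_zero by lia. rewrite <- E. right. field. lra.
    - pose proof (IHN ltac:(lia)). pose proof (bt_ratio n m N phi Hm ltac:(lia) ltac:(lia) Hp).
      rewrite <- Hr in H1.
      apply Rle_trans with ((bt n m phi - rho * bt n N phi) / (1 - rho) + bt n (S N) phi). lra.
      apply Rmult_le_reg_r with (1 - rho). lra.
      unfold Rdiv. rewrite Rmult_plus_distr_r, !Rmult_assoc, Rinv_l by lra. nra. }
  pose proof (Hgen n ltac:(lia)). pose proof (bt_nonneg n n phi ltac:(lra)).
  apply Rle_trans with (1 := H). unfold Rdiv. apply Rmult_le_compat_r.
  apply Rlt_le, Rinv_0_lt_compat; lra. nra.
Qed.


Lemma is_derive_eq (f : R -> R) x l l' : is_derive f x l -> l = l' -> is_derive f x l'.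
Proof. intros H ->. exact H. Qed.

Lemma dpow j k (u : R) : is_derive (fun x => x ^ j * (1 - x) ^ k) u
  (INR j * u ^ (pred j) - 0 + 0) .
Abort.

Lemma dpow j k (u : R) : is_derive (fun x => x ^ j * (1 - x) ^ k) u
  (INR j * u ^ (pred j) * (1 - u) ^ k - INR k * u ^ j * (1 - u) ^ (pred k)).
Proof.
  assert (H1 : is_derive (fun x : R => x ^ j) u (INR j * 1 * u ^ pred j)).
  { apply (is_derive_pow (fun x => x)). apply (is_derive_id (K:=R_AbsRing)). }
  assert (H2 : is_derive (fun x : R => (1 - x) ^ k) u (INR k * (-1) * (1 - u) ^ pred k)).
  { apply (is_derive_pow (fun x => 1 - x)). auto_derive. auto. ring. }
  pose proof (is_derive_mult (K:=R_AbsRing) _ _ u _ _ H1 H2 Rmult_comm) as H.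
  eapply is_derive_eq. exact H. simpl. unfold plus, mult; simpl. ring.
Qed.

Lemma dbt n j (u : R) : is_derive (fun x => bt n j x) u
  (Binomial.C n j * (INR j * u ^ (pred j) * (1 - u) ^ (n - j) - INR (n - j) * u ^ j * (1 - u) ^ (pred (n - j)))).
Proof.
  unfold bt. apply is_derive_ext with (fun x => Binomial.C n j * (x ^ j * (1 - x) ^ (n - j))).
  intros t; symmetry; apply Rmult_assoc. apply is_derive_scal. apply dpow.
Qed.

Lemma Gu_deriv n m N (u : R) : (1 <= m)%nat -> (m <= N)%nat -> (N <= n)%nat ->
  is_derive (fun x => Gu n m N x) u
   (INR m * Binomial.C n m * u ^ (m - 1) * (1 - u) ^ (n - m)
    - INR (n - N) * Binomial.C n N * u ^ N * (1 - u) ^ (n - N - 1)).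
Proof.
  intros Hm. induction N; intros HmN HNn. lia.
  apply is_derive_ext with (fun x => Gu n m N x + bt n (S N) x).
  { intros t. rewrite Gu_S. destruct (Nat.leb_spec m (S N)); [reflexivity|lia]. }
  destruct (Nat.eq_dec m (S N)) as [E|E].
  - apply is_derive_ext with (fun x => bt n (S N) x).
    { intros t. rewrite Gu_zero by lia. symmetry; apply Rplus_0_l. }
    eapply is_derive_eq. apply dbt. subst m. simpl pred.
    replace (S N - 1)%nat with N by lia. rewrite Nat.sub_1_r. match goal with |- ?a = ?b => change (@eq R a b) end. ring.
  - pose proof (IHN ltac:(lia) ltac:(lia)) as IH.
    pose proof (dbt n (S N) u) as Hb.
    pose proof (is_derive_plus (K:=R_AbsRing) _ _ u _ _ IH Hb) as Hs.
    eapply is_derive_eq. exact Hs. match goal with |- plus ?a ?b = ?c => change (@eq R (a + b) c) end.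
    change (Init.Nat.pred (S N)) with N.
    replace (n - N - 1)%nat with (n - S N)%nat by lia. rewrite (Nat.sub_1_r (n - S N)).
    rewrite pascal_step3 by lia.
    match goal with |- ?a = ?b => change (@eq R a b) end.
    field. apply not_0_INR. lia.
Qed.


Lemma pow_exp_ln (u : R) k : 0 < u -> u ^ k = exp (INR k * ln u).
Proof. intros. rewrite <- ln_pow by auto. rewrite exp_ln; auto. apply pow_lt; auto. Qed.

Lemma key_ln (phi u : R) : 0 < u -> u <= phi -> phi < 1 ->
  let v := ln phi - ln u in let q := 1 - phi in
  phi / q * v - phi / (2 * q ^ 2) * v ^ 2 <= ln (1 - u) - ln q.
Proof.
  intros Hu Hup Hp1 v q.
  assert (Hv : 0 <= v) by (unfold v; assert (ln u <= ln phi) by (apply (ln_le u phi); lra); lra).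
  assert (Hq : 0 < q) by (unfold q; lra).
  set (w := (phi - u) / q).
  assert (Hw : 0 <= w) by (unfold w; apply Rmult_le_pos; [lra| apply Rlt_le, Rinv_0_lt_compat; lra]).
  assert (E1 : ln (1 - u) - ln q = ln (1 + w)).
  { replace (1 - u) with (q * (1 + w)) by (unfold w, q; field; lra).
    rewrite ln_mult by lra. ring. }
  rewrite E1.
  assert (Eexp : exp (- v) = u / phi).
  { unfold v. replace (- (ln phi - ln u)) with (ln u - ln phi) by ring.
    unfold Rminus. rewrite exp_plus, exp_Ropp, !exp_ln by lra. field. lra. }
  assert (Ew : w = phi / q * (1 - exp (- v))) by (rewrite Eexp; unfold w; field; lra).
  pose proof (L4 v Hv). pose proof (L5 v). pose proof (L3 w Hw).
  assert (Hpq : 0 < phi / q) by (apply Rdiv_lt_0_compat; lra).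
  assert (W1 : phi / q * (v - v ^ 2 / 2) <= w) by (rewrite Ew; apply Rmult_le_compat_l; lra).
  assert (W2 : w <= phi / q * v) by (rewrite Ew; apply Rmult_le_compat_l; lra).
  assert (W3 : w ^ 2 <= (phi / q * v) ^ 2) by (apply pow_incr; lra).
  assert (Eid : phi / q * v - phi / (2 * q ^ 2) * v ^ 2
     = phi / q * (v - v ^ 2 / 2) - (phi / q * v) ^ 2 / 2).
  { unfold q. field. lra. }
  rewrite Eid. lra.
Qed.

Lemma exp_le (x y : R) : x <= y -> exp x <= exp y.
Proof. intros [H|H]. apply Rlt_le, exp_increasing; auto. subst; lra. Qed.

Lemma pointwise n m (phi u : R) : (1 <= m)%nat -> (m <= n)%nat -> 0 < u <= phi -> phi < 1 ->
  let M := INR m in let Nr := INR (n - m) in let q := 1 - phi in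
  let a := M - Nr * phi / q in let b := Nr * phi / (2 * q ^ 2) in let c := 2 * b / a ^ 2 in
  let v := ln phi - ln u in
  M * Binomial.C n m * phi ^ (m - 1) * q ^ (n - m) * exp (- c) * exp (- (a - 1) * v) * (1 + c - b * v ^ 2)
  <= M * Binomial.C n m * u ^ (m - 1) * (1 - u) ^ (n - m).
Proof.
  intros Hm Hmn Hu Hp1 M Nr q a b c v.
  assert (Hq : 0 < q) by (unfold q; lra).
  assert (HMC : 0 < M * Binomial.C n m) by (apply Rmult_lt_0_compat; [apply lt_0_INR; lia| apply C_pos]).
  assert (HNr : 0 <= Nr) by apply pos_INR.
  pose proof (key_ln phi u ltac:(lra) ltac:(lra) Hp1) as K. cbv zeta in K. fold q v in K.
  rewrite !(pow_exp_ln _ (m - 1)) by lra. rewrite !(pow_exp_ln _ (n - m)) by lra.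
  rewrite minus_INR by lia. fold M Nr. simpl (INR 1).
  set (X := (M - 1) * ln phi + Nr * ln q + - c + - (a - 1) * v).
  replace (M * Binomial.C n m * exp ((M - 1) * ln phi) * exp (Nr * ln q) * exp (- c) *
    exp (- (a - 1) * v) * (1 + c - b * v ^ 2)) with ((M * Binomial.C n m) * (exp X * (1 + c - b * v ^ 2)))
    by (unfold X; rewrite !exp_plus; ring).
  replace (M * Binomial.C n m * exp ((M - 1) * ln u) * exp (Nr * ln (1 - u))) with
    ((M * Binomial.C n m) * exp ((M - 1) * ln u + Nr * ln (1 - u))) by (rewrite !exp_plus; ring).
  apply Rmult_le_compat_l. lra.
  apply Rle_trans with (exp X * exp (c - b * v ^ 2)).
  - apply Rmult_le_compat_l. apply Rlt_le, exp_pos.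
    pose proof (exp_ineq1_le (c - b * v ^ 2)). lra.
  - rewrite <- exp_plus. apply exp_le.
    assert (Ev : ln u = ln phi - v) by (unfold v; ring).
    rewrite Ev.
    assert (Ea : a - 1 = M - 1 - Nr * (phi / q)) by (unfold a; field; lra).
    assert (Eb : b = Nr * (phi / (2 * q ^ 2))) by (unfold b; field; lra).
    unfold X. rewrite Ea, Eb.
    assert (Nr * (phi / q * v - phi / (2 * q ^ 2) * v ^ 2) <= Nr * (ln (1 - u) - ln q))
      by (apply Rmult_le_compat_l; auto).
    nra.
Qed.

Lemma PX_lower n m (phi : R) : (1 <= m)%nat -> (m < n)%nat -> 0 < phi < 1 ->
  let M := INR m in let Nr := INR (n - m) in let q := 1 - phi in
  let a := M - Nr * phi / q in let b := Nr * phi / (2 * q ^ 2) in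
  0 < a ->
  bt n m phi * (M / a) * exp (- (2 * b / a ^ 2)) <= Gu n m n phi.
Proof.
  intros Hm Hmn Hp M Nr q a b Ha.
  assert (Hq : 0 < q) by (unfold q; lra).
  assert (HNr : 1 <= Nr) by (apply (le_INR 1); lia).
  assert (Hb : 0 < b) by (unfold b; apply Rdiv_lt_0_compat; [nra| apply Rmult_lt_0_compat; [lra| apply pow_lt; lra]]).
  set (c := 2 * b / a ^ 2).
  set (K0 := M * Binomial.C n m * phi ^ (m - 1) * q ^ (n - m) * exp (- c)).
  set (Hf := fun x => K0 * (phi / a) * exp (- a * (ln phi - ln x)) *
     (1 - b * (ln phi - ln x) ^ 2 - 2 * b * (ln phi - ln x) / a)).
  set (V := / sqrt b).
  assert (HV : 0 < V) by (unfold V; apply Rinv_0_lt_compat, sqrt_lt_R0; lra).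
  assert (HbV : b * V ^ 2 = 1).
  { unfold V. rewrite <- Rinv_pow by (apply Rgt_not_eq, sqrt_lt_R0; lra).
    simpl. rewrite Rmult_1_r, sqrt_sqrt by lra. field. lra. }
  set (u0 := phi * exp (- V)).
  assert (Hu0 : 0 < u0 < phi).
  { unfold u0. split. apply Rmult_lt_0_compat; [lra|apply exp_pos].
    rewrite <- (Rmult_1_r phi) at 2. apply Rmult_lt_compat_l. lra.
    rewrite <- exp_0. apply exp_increasing. lra. }
  assert (Hv0 : ln phi - ln u0 = V).
  { unfold u0. rewrite ln_mult, ln_exp by (try lra; apply exp_pos). ring. }
  assert (HK0 : 0 < K0).
  { unfold K0. apply Rmult_lt_0_compat; [|apply exp_pos].
    apply Rmult_lt_0_compat; [|apply pow_lt; lra].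
    apply Rmult_lt_0_compat; [|apply pow_lt; lra].
    apply Rmult_lt_0_compat; [apply lt_0_INR; lia| apply C_pos]. }
  assert (HdHf : forall x, 0 < x -> is_derive Hf x
     (K0 * exp (- (a - 1) * (ln phi - ln x)) * (1 + c - b * (ln phi - ln x) ^ 2))).
  { intros x Hx. unfold Hf. auto_derive. auto.
    assert (Ee : exp (- (a - 1) * (ln phi - ln x)) = exp (- a * (ln phi - ln x)) * (phi / x)).
    { replace (- (a - 1) * (ln phi - ln x)) with (- a * (ln phi - ln x) + (ln phi - ln x)) by ring.
      rewrite exp_plus. f_equal. unfold Rminus. rewrite exp_plus, exp_Ropp, !exp_ln by lra. field. lra. }
    match goal with |- ?a = ?b => change (@eq R a b) end. rewrite Ee. unfold c. unfold Rminus. set (E := exp (- a * (ln phi + - ln x))). set (L := ln phi + - ln x). assert (a <> 0) by lra. assert (x <> 0) by lra. clear -H H0. clearbody E L. field. auto. }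
  assert (Hincr : Gu n m n u0 - Hf u0 <= Gu n m n phi - Hf phi).
  { apply (incr_on (fun x => Gu n m n x - Hf x)
      (fun x => INR m * Binomial.C n m * x ^ (m - 1) * (1 - x) ^ (n - m) - 
                K0 * exp (- (a - 1) * (ln phi - ln x)) * (1 + c - b * (ln phi - ln x) ^ 2))).
    - lra.
    - intros x Hx.
      pose proof (Gu_deriv n m n x Hm ltac:(lia) ltac:(lia)) as Hg.
      rewrite Nat.sub_diag in Hg. simpl (INR 0) in Hg.
      pose proof (HdHf x ltac:(lra)) as Hh.
      pose proof (is_derive_minus (K:=R_AbsRing) (V:=R_NormedModule) _ _ x _ _ Hg Hh) as Hs.
      eapply is_derive_eq. exact Hs. unfold minus, plus, opp. simpl. ring.
    - intros x Hx. pose proof (pointwise n m phi x Hm ltac:(lia) ltac:(lra) ltac:(lra)) as P.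
      cbv zeta in P. fold M Nr q a b c in P. fold K0 in P. unfold M in P. lra. }
  assert (Hf0 : Hf u0 <= 0).
  { unfold Hf. cbv beta. rewrite Hv0.
    replace (1 - b * V ^ 2 - 2 * b * V / a) with (- (2 * b * V / a)) by lra.
    assert (0 < 2 * b * V / a) by (apply Rdiv_lt_0_compat; nra).
    assert (0 < K0 * (phi / a) * exp (- a * V)).
    { apply Rmult_lt_0_compat; [apply Rmult_lt_0_compat|apply exp_pos]; auto. apply Rdiv_lt_0_compat; lra. }
    nra. }
  assert (Hfp : Hf phi = K0 * (phi / a)).
  { unfold Hf. cbv beta. replace (ln phi - ln phi) with 0 by ring.
    replace (- a * 0) with 0 by ring. rewrite exp_0. field. lra. }
  pose proof (Gu_nonneg n m n u0 ltac:(lra)).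
  assert (Hfin : K0 * (phi / a) <= Gu n m n phi) by lra.
  eapply Rle_trans; [|exact Hfin].
  unfold K0, bt. right. fold q.
  replace m with (S (m - 1)) at 2 by lia. simpl pow. field. lra.
Qed.


Lemma ln_sqrt' z : 0 < z -> ln (sqrt z) = / 2 * ln z.
Proof.
  intros Hz. assert (Hs : 0 < sqrt z) by (apply sqrt_lt_R0; auto).
  rewrite <- (sqrt_sqrt z) at 2 by lra. rewrite ln_mult by auto. field.
Qed.

Lemma ln_fact k : (1 <= k)%nat -> ln (INR (fact k)) = dd k + (INR k + / 2) * ln (INR k) - INR k.
Proof. intros. unfold dd. ring. Qed.

Lemma lE_bound n t phi : (1 <= n)%nat -> 0 < phi -> phi < t -> t < 1 ->
  1 / (12 * INR n) <= lE n t phi / (INR n * (t - phi)).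
Proof.
  intros Hn Hp Hpt Ht. assert (HN : 1 <= INR n) by (apply (le_INR 1); lia).
  pose proof PI2_3_2.
  assert (Hl : (t - phi) / 12 <= lE n t phi).
  { unfold lE. apply Rmin_glb; [|lra].
    assert (1 <= sqrt (PI * INR n / (8 * phi * (1 - phi)))).
    { apply Rle_trans with (sqrt 1); [rewrite sqrt_1; lra|]. apply sqrt_le_1_alt.
      assert (0 < 8 * phi * (1 - phi)) by (assert (0 < phi * (1 - phi)) by (apply Rmult_lt_0_compat; lra); lra).
      assert (8 * phi * (1 - phi) <= 2) by (pose proof (pow2_ge_0 (2 * phi - 1)); nra).
      assert (/ 2 <= / (8 * phi * (1 - phi))) by (apply Rinv_le_contravar; lra).
      unfold Rdiv. assert (3 <= PI * INR n) by nra.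
      apply Rle_trans with (3 * / 2); [lra|]. apply Rmult_le_compat; lra. }
    nra. }
  apply Rmult_le_reg_r with (INR n * (t - phi)). nra.
  unfold Rdiv. rewrite (Rmult_assoc (lE n t phi)), Rinv_l by nra.
  replace (1 * / (12 * INR n) * (INR n * (t - phi))) with ((t - phi) / 12) by (field; lra). lra.
Qed.

Theorem mainTheorem9 (n m : nat) (phi t : R)
  (hn : (1 <= n)%nat) (hphi : 0 < phi) (hphit : phi < t) (ht1 : t < 1)
  (hnt : INR n * t = INR m) :
  let base := - ln (P_CH n t phi) + / 2 * ln (INR n)
              - ln ((1 - phi) / (t - phi) * sqrt (t / (2 * PI * (1 - t)))) in
  base - lE n t phi / (INR n * (t - phi)) <= - ln (P_X n m phi) <=
  base + (phi * (1 - phi) / ((t - phi) ^ 2 * INR n) + 1 / (12 * INR n * t * (1 - t))).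
Proof.
  intros base.
  assert (HN : 1 <= INR n) by (apply (le_INR 1); lia).
  assert (Hm1 : (1 <= m)%nat).
  { destruct m. simpl in hnt. nra. lia. }
  assert (Hmn : (m < n)%nat).
  { apply INR_lt. nra. }
  set (Nn := INR n) in *. set (M := INR m) in *. set (Nr := INR (n - m)).
  assert (HNr : Nr = Nn * (1 - t)) by (unfold Nr; rewrite minus_INR by lia; fold Nn M; nra).
  assert (HM1 : 1 <= M) by (apply (le_INR 1); lia).
  assert (HNr1 : 1 <= Nr) by (apply (le_INR 1); lia).
  set (q := 1 - phi).
  assert (Hq : 0 < q) by (unfold q; lra).
  set (R0 := t * q / (t - phi)).
  assert (HR0 : 0 < R0) by (unfold R0; apply Rdiv_lt_0_compat; nra).
  set (bm := bt n m phi).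
  assert (Hbm : 0 < bm).
  { unfold bm, bt. apply Rmult_lt_0_compat; [apply Rmult_lt_0_compat|]; [apply C_pos| apply pow_lt; lra| apply pow_lt; lra]. }
  assert (HPX : P_X n m phi = Gu n m n phi) by reflexivity.
  assert (HU : P_X n m phi <= bm * R0).
  { rewrite HPX. set (rho := Nr * phi / (M * q)).
    assert (E1 : 1 - rho = (t - phi) / (t * q)).
    { unfold rho. rewrite HNr, <- hnt. unfold q. field. repeat split; nra. }
    assert (rho < 1) by (assert (0 < (t - phi) / (t * q)) by (apply Rdiv_lt_0_compat; nra); lra).
    eapply Rle_trans. apply (Gu_upper n m phi rho); auto; try lia; lra.
    right. fold bm. rewrite E1. unfold R0. field. repeat split; nra. }
  set (c := (1 - t) * phi / (Nn * (t - phi) ^ 2)).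
  assert (HL : bm * R0 * exp (- c) <= P_X n m phi).
  { rewrite HPX. pose proof (PX_lower n m phi Hm1 Hmn ltac:(lra)) as P. cbv zeta in P.
    fold M Nr q in P.
    assert (Ea : M - Nr * phi / q = Nn * (t - phi) / q) by (rewrite HNr, <- hnt; unfold q; field; lra).
    rewrite Ea in P. fold bm in P.
    assert (Hpos : 0 < Nn * (t - phi) / q) by (apply Rdiv_lt_0_compat; nra).
    specialize (P Hpos).
    replace (M / (Nn * (t - phi) / q)) with R0 in P by (unfold R0; rewrite <- hnt; field; repeat split; nra).
    replace (2 * (Nr * phi / (2 * q ^ 2)) / (Nn * (t - phi) / q) ^ 2) with c in P
      by (unfold c; rewrite HNr; field; repeat split; nra).
    exact P. }
  assert (HPXpos : 0 < P_X n m phi).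
  { assert (0 < bm * R0 * exp (- c)) by (apply Rmult_lt_0_compat; [apply Rmult_lt_0_compat|apply exp_pos]; auto). lra. }
  assert (Hlu : ln (P_X n m phi) <= ln (bm * R0)) by (apply ln_le; auto).
  assert (Hll : ln (bm * R0 * exp (- c)) <= ln (P_X n m phi)) by (apply ln_le; auto; pose proof (exp_pos (-c)); nra).
  rewrite ln_mult, ln_exp in Hll by (try apply exp_pos; nra).
  assert (Hlbm : ln bm = ln (Binomial.C n m) + M * ln phi + Nr * ln q).
  { unfold bm, bt. rewrite !ln_mult, !ln_pow; try (apply pow_lt; lra); try lra; try apply C_pos.
    fold M Nr q. ring. apply Rmult_lt_0_compat. apply C_pos. apply pow_lt; lra. }
  assert (HlC : ln (Binomial.C n m) = dd n - dd m - dd (n - m) + (Nn + /2) * ln Nn - (M + /2) * ln M - (Nr + /2) * ln Nr).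
  { unfold Binomial.C. pose proof (fact_pos' n). pose proof (fact_pos' m). pose proof (fact_pos' (n-m)).
    rewrite ln_div, ln_mult by (try apply Rmult_lt_0_compat; lra).
    rewrite !ln_fact by lia. fold Nn M Nr. rewrite HNr. rewrite <- hnt. ring. }
  assert (HlM : ln M = ln Nn + ln t) by (rewrite <- hnt, ln_mult; lra).
  assert (HlNr : ln Nr = ln Nn + ln (1 - t)) by (rewrite HNr, ln_mult; lra).
  pose proof (dd_lower n hn) as D1. pose proof (dd_upper n hn) as D2.
  pose proof (dd_lower m Hm1) as D3. pose proof (dd_upper m Hm1) as D4.
  pose proof (dd_lower (n - m) ltac:(lia)) as D5. pose proof (dd_upper (n - m) ltac:(lia)) as D6.
  fold Nn in D2. fold M in D4. fold Nr in D6.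
  assert (Hbase : base = - (M * (ln phi - ln t) + Nr * (ln q - ln (1 - t))) + / 2 * ln Nn
     - (ln q - ln (t - phi) + / 2 * (ln t - ln 2 - ln PI - ln (1 - t)))).
  { unfold base, P_CH. destruct (Rle_dec phi t); [|lra]. unfold Rpower.
    pose proof PI_RGT_0.
    rewrite ln_mult, !ln_exp by (apply exp_pos).
    rewrite ln_mult; [| apply Rdiv_lt_0_compat; lra| apply sqrt_lt_R0; apply Rdiv_lt_0_compat; nra].
    rewrite ln_sqrt' by (apply Rdiv_lt_0_compat; nra).
    rewrite !ln_div by (try apply Rmult_lt_0_compat; try apply Rmult_lt_0_compat; lra).
    rewrite !ln_mult by lra. fold Nn q. rewrite hnt.
    replace (Nn * (1 - t)) with Nr by (rewrite HNr; ring). ring. }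
  assert (Hcst : cst = / 2 * (ln 2 + ln PI)) by (unfold cst; rewrite ln_mult; [ring|lra|apply PI_RGT_0]).
  assert (HlR0 : ln R0 = ln t + ln q - ln (t - phi)).
  { unfold R0. rewrite ln_div, ln_mult by nra. ring. }
  rewrite ln_mult in Hlu, Hll by nra.
  pose proof (lE_bound n t phi hn hphi hphit ht1) as HlE. fold Nn in HlE.
  assert (Hc : c <= phi * (1 - phi) / ((t - phi) ^ 2 * Nn)).
  { unfold c. unfold Rdiv. rewrite (Rmult_comm ((t-phi)^2)).
    apply Rmult_le_compat_r. apply Rlt_le, Rinv_0_lt_compat. apply Rmult_lt_0_compat; [lra| apply pow_lt; lra]. nra. }
  assert (Hm12 : 1 / (12 * M) + 1 / (12 * Nr) = 1 / (12 * Nn * t * (1 - t))).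
  { rewrite <- hnt, HNr. field. repeat split; nra. }
  assert (Hid : ln bm + ln R0 + base = dd n - dd m - dd (n - m) + cst).
  { rewrite Hlbm, HlC, HlM, HlNr, HlR0, Hbase, Hcst.
    rewrite HNr. rewrite <- hnt. field. }
  fold q in Hc. clearbody base. clear Hbase. split; lra.
Qed.
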